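(* The category of small symmetric purely monoidal categories and symmetric (strong) monoidal functors between them is a reflective subcategory of the category of small symmetric monoidal categories and symmetric (strong) monoidal functors.
   Context: An object $A$ of a monoidal category $(\mathcal M,\otimes,I)$ is weakly invertible if there is an object $B$ with $A\otimes B\cong B\otimes A\cong I$. A monoidal category $\mathcal M$ is purely monoidal (pure) if for any pair of weakly invertible objects of $\mathcal M$ there is exactly one isomorphism between them (equivalently, every weakly invertible object is isomorphic to the unit and the unit has only the identity automorphism). A symmetric purely monoidal category is a symmetric monoidal category which is pure. Monoidal functors are strong monoidal, i.e. their unit and tensor coherence maps are isomorphisms. Both categories here are regarded as ordinary 1-categories. *)

(* Defs.v *)
Set Implicit Arguments.

Record Cat : Type := {
  ob : Type;
  hom : ob -> ob -> Type;
  idm : forall a, hom a a;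
  comp : forall a b c, hom b c -> hom a b -> hom a c;
  comp_idl : forall a b (f : hom a b), comp (idm b) f = f;
  comp_idr : forall a b (f : hom a b), comp f (idm a) = f;
  comp_assoc : forall a b c d (f : hom c d) (g : hom b c) (h : hom a b),
      comp f (comp g h) = comp (comp f g) h
}.
Arguments hom {_} _ _.
Arguments idm {_} _.
Arguments comp {_ _ _ _} _ _.

Definition is_iso (C : Cat) (a b : ob C) (f : hom a b) : Prop :=
  exists g : hom b a, comp g f = idm a /\ comp f g = idm b.
Arguments is_iso {C a b} f.

Definition isomorphic (C : Cat) (a b : ob C) : Prop :=
  exists f : hom a b, is_iso f.
Arguments isomorphic {C} a b.

Record SMC : Type := {
  scat :> Cat;
  tens : ob scat -> ob scat -> ob scat;
  tensm : forall a b c d, hom a b -> hom c d -> hom (tens a c) (tens b d);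
  tens_id : forall a c, tensm _ _ _ _ (idm a) (idm c) = idm (tens a c);
  tens_comp : forall a b e c d g (f : hom b e) (f' : hom a b)
                     (h : hom d g) (h' : hom c d),
      tensm _ _ _ _ (comp f f') (comp h h') = comp (tensm _ _ _ _ f h) (tensm _ _ _ _ f' h');
  unit : ob scat;
  asc : forall a b c, hom (tens (tens a b) c) (tens a (tens b c));
  asc_iso : forall a b c, is_iso (asc a b c);
  asc_nat : forall a a' b b' c c' (f : hom a a') (g : hom b b') (h : hom c c'),
      comp (asc a' b' c') (tensm _ _ _ _ (tensm _ _ _ _ f g) h)
      = comp (tensm _ _ _ _ f (tensm _ _ _ _ g h)) (asc a b c);
  lu : forall a, hom (tens unit a) a;
  lu_iso : forall a, is_iso (lu a);
  lu_nat : forall a a' (f : hom a a'),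
      comp (lu a') (tensm _ _ _ _ (idm unit) f) = comp f (lu a);
  ru : forall a, hom (tens a unit) a;
  ru_iso : forall a, is_iso (ru a);
  ru_nat : forall a a' (f : hom a a'),
      comp (ru a') (tensm _ _ _ _ f (idm unit)) = comp f (ru a);
  pentagon : forall a b c d,
      comp (asc a b (tens c d)) (asc (tens a b) c d)
      = comp (tensm _ _ _ _ (idm a) (asc b c d))
             (comp (asc a (tens b c) d) (tensm _ _ _ _ (asc a b c) (idm d)));
  triangle : forall a b,
      comp (tensm _ _ _ _ (idm a) (lu b)) (asc a unit b) = tensm _ _ _ _ (ru a) (idm b);
  br : forall a b, hom (tens a b) (tens b a);
  br_nat : forall a a' b b' (f : hom a a') (g : hom b b'),
      comp (br a' b') (tensm _ _ _ _ f g) = comp (tensm _ _ _ _ g f) (br a b);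
  br_sym : forall a b, comp (br b a) (br a b) = idm (tens a b);
  hexagon : forall a b c,
      comp (asc b c a) (comp (br a (tens b c)) (asc a b c))
      = comp (tensm _ _ _ _ (idm b) (br a c))
             (comp (asc b a c) (tensm _ _ _ _ (br a b) (idm c)))
}.
Arguments tensm _ {a b c d} _ _.

Definition weakly_invertible (M : SMC) (a : ob M) : Prop :=
  exists b : ob M, isomorphic (tens M a b) (unit M) /\
                   isomorphic (tens M b a) (unit M).

Arguments weakly_invertible {M} a.

Definition pure (M : SMC) : Prop :=
  forall a b : ob M, weakly_invertible a -> weakly_invertible b ->
    exists f : hom a b, is_iso f /\ forall g : hom a b, is_iso g -> g = f.

Record SMFData (M N : SMC) : Type := {
  fob : ob M -> ob N;
  fmor : forall a b, hom a b -> hom (fob a) (fob b);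
  phi0 : hom (unit N) (fob (unit M));
  phi2 : forall a b, hom (tens N (fob a) (fob b)) (fob (tens M a b))
}.
Arguments fob {M N} _ _.
Arguments fmor {M N} _ {a b} _.
Arguments phi0 {M N} _.
Arguments phi2 {M N} _ _ _.

Definition is_SMF (M N : SMC) (F : SMFData M N) : Prop :=
  (forall a, fmor F (idm a) = idm (fob F a)) /\
  (forall a b c (g : hom b c) (f : hom a b),
      fmor F (comp g f) = comp (fmor F g) (fmor F f)) /\
  is_iso (phi0 F) /\
  (forall a b, is_iso (phi2 F a b)) /\
  (forall a a' b b' (f : hom a a') (g : hom b b'),
      comp (phi2 F a' b') (tensm N (fmor F f) (fmor F g))
      = comp (fmor F (tensm M f g)) (phi2 F a b)) /\
  (forall a b c,
      comp (fmor F (asc M a b c))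
           (comp (phi2 F (tens M a b) c) (tensm N (phi2 F a b) (idm (fob F c))))
      = comp (phi2 F a (tens M b c))
             (comp (tensm N (idm (fob F a)) (phi2 F b c))
                   (asc N (fob F a) (fob F b) (fob F c)))) /\
  (forall a,
      comp (fmor F (lu M a))
           (comp (phi2 F (unit M) a) (tensm N (phi0 F) (idm (fob F a))))
      = lu N (fob F a)) /\
  (forall a,
      comp (fmor F (ru M a))
           (comp (phi2 F a (unit M)) (tensm N (idm (fob F a)) (phi0 F)))
      = ru N (fob F a)) /\
  (forall a b,
      comp (fmor F (br M a b)) (phi2 F a b)
      = comp (phi2 F b a) (br N (fob F a) (fob F b))).

Arguments is_SMF {M N} F.

Record SMFunctor (M N : SMC) : Type := {
  smf_data :> SMFData M N;
  smf_prop : is_SMF smf_data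
}.

Definition smf_comp_data (M N P : SMC) (G : SMFData N P) (F : SMFData M N)
  : SMFData M P :=
  {| fob := fun a => fob G (fob F a);
     fmor := fun a b f => fmor G (fmor F f);
     phi0 := comp (fmor G (phi0 F)) (phi0 G);
     phi2 := fun a b => comp (fmor G (phi2 F a b)) (phi2 G (fob F a) (fob F b)) |}.

(* Main.v *)
Require Import Defs.
From Stdlib Require Import ClassicalEpsilon FunctionalExtensionality PropExtensionality ProofIrrelevance Eqdep.

Lemma iso_id (C : Cat) (a : ob C) : is_iso (idm a).
Proof. exists (idm a); split; apply comp_idl. Qed.

Lemma iso_comp (C : Cat) (a b c : ob C) (g : hom b c) (f : hom a b) :
  is_iso g -> is_iso f -> is_iso (comp g f).
Proof.
  intros [g' [Hg1 Hg2]] [f' [Hf1 Hf2]]. exists (comp f' g'); split.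
  - rewrite <- !comp_assoc, (comp_assoc _ _ _ _ _ g' g f), Hg1, comp_idl. exact Hf1.
  - rewrite <- !comp_assoc, (comp_assoc _ _ _ _ _ f f' g'), Hf2, comp_idl. exact Hg2.
Qed.

Definition inv (C : Cat) (a b : ob C) (f : hom a b) (H : is_iso f) : hom b a :=
  proj1_sig (constructive_indefinite_description _ H).
Arguments inv {C a b} f H.

Lemma inv_l (C : Cat) (a b : ob C) (f : hom a b) (H : is_iso f) : comp (inv f H) f = idm a.
Proof. unfold inv. destruct (constructive_indefinite_description _ H) as [g [H1 H2]]; exact H1. Qed.
Lemma inv_r (C : Cat) (a b : ob C) (f : hom a b) (H : is_iso f) : comp f (inv f H) = idm b.
Proof. unfold inv. destruct (constructive_indefinite_description _ H) as [g [H1 H2]]; exact H2. Qed.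
Lemma inv_iso (C : Cat) (a b : ob C) (f : hom a b) (H : is_iso f) : is_iso (inv f H).
Proof. exists f; split; [apply inv_r | apply inv_l]. Qed.

Lemma iso_cancel_r (C : Cat) (a b c : ob C) (h : hom a b) (u v : hom b c) :
  is_iso h -> comp u h = comp v h -> u = v.
Proof.
  intros [h' [H1 H2]] E.
  rewrite <- (comp_idr _ _ _ u), <- (comp_idr _ _ _ v), <- H2, !comp_assoc, E. reflexivity.
Qed.

Lemma iso_cancel_l (C : Cat) (a b c : ob C) (h : hom b c) (u v : hom a b) :
  is_iso h -> comp h u = comp h v -> u = v.
Proof.
  intros [h' [H1 H2]] E.
  rewrite <- (comp_idl _ _ _ u), <- (comp_idl _ _ _ v), <- H1, <- !comp_assoc, E. reflexivity.
Qed.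

Lemma isomorphic_trans (C : Cat) (a b c : ob C) : isomorphic a b -> isomorphic b c -> isomorphic a c.
Proof. intros [f Hf] [g Hg]. exists (comp g f). apply iso_comp; auto. Qed.

Lemma isomorphic_sym (C : Cat) (a b : ob C) : isomorphic a b -> isomorphic b a.
Proof. intros [f [g [H1 H2]]]. exists g. exists f. split; auto. Qed.

Lemma crw (C : Cat) (a b c : ob C) (p : hom b c) (q : hom a b) (r : hom a c) :
  comp p q = r -> forall x (s : hom x a), comp p (comp q s) = comp r s.
Proof. intros E x s. rewrite comp_assoc, E. reflexivity. Qed.

Lemma tens_iso (N : SMC) (a b c d : ob N) (f : hom a b) (g : hom c d) :
  is_iso f -> is_iso g -> is_iso (tensm N f g).
Proof.
  intros [f' [F1 F2]] [g' [G1 G2]]. exists (tensm N f' g'); split;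
  rewrite <- tens_comp; [rewrite F1, G1 | rewrite F2, G2]; apply tens_id.
Qed.

Definition canN (N : SMC) (pN : pure N) (a b : ob N)
  (wa : weakly_invertible a) (wb : weakly_invertible b) : hom a b :=
  proj1_sig (constructive_indefinite_description _ (pN a b wa wb)).

Lemma canN_iso (N : SMC) (pN : pure N) a b wa wb : is_iso (canN N pN a b wa wb).
Proof. unfold canN. destruct (constructive_indefinite_description _ _) as [f [H1 H2]]; exact H1. Qed.

Lemma canN_uniq (N : SMC) (pN : pure N) a b wa wb (g : hom a b) :
  is_iso g -> g = canN N pN a b wa wb.
Proof. unfold canN. destruct (constructive_indefinite_description _ _) as [f [H1 H2]]; auto. Qed.

Lemma smf_id (M N : SMC) (F : SMFunctor M N) a : fmor F (idm a) = idm (fob F a).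
Proof. destruct (smf_prop F) as (H & _); apply H. Qed.
Lemma smf_comp (M N : SMC) (F : SMFunctor M N) a b c (g : hom b c) (f : hom a b) :
  fmor F (comp g f) = comp (fmor F g) (fmor F f).
Proof. destruct (smf_prop F) as (_ & H & _); apply H. Qed.
Lemma smf_phi0_iso (M N : SMC) (F : SMFunctor M N) : is_iso (phi0 F).
Proof. destruct (smf_prop F) as (_ & _ & H & _); apply H. Qed.
Lemma smf_phi2_iso (M N : SMC) (F : SMFunctor M N) a b : is_iso (phi2 F a b).
Proof. destruct (smf_prop F) as (_ & _ & _ & H & _); apply H. Qed.
Lemma smf_nat (M N : SMC) (F : SMFunctor M N) a a' b b' (f : hom a a') (g : hom b b') :
  comp (phi2 F a' b') (tensm N (fmor F f) (fmor F g)) = comp (fmor F (tensm M f g)) (phi2 F a b).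
Proof. destruct (smf_prop F) as (_ & _ & _ & _ & H & _); apply H. Qed.
Lemma smf_asc (M N : SMC) (F : SMFunctor M N) a b c :
      comp (fmor F (asc M a b c))
           (comp (phi2 F (tens M a b) c) (tensm N (phi2 F a b) (idm (fob F c))))
      = comp (phi2 F a (tens M b c))
             (comp (tensm N (idm (fob F a)) (phi2 F b c))
                   (asc N (fob F a) (fob F b) (fob F c))).
Proof. destruct (smf_prop F) as (_ & _ & _ & _ & _ & H & _); apply H. Qed.
Lemma smf_lu (M N : SMC) (F : SMFunctor M N) a :
      comp (fmor F (lu M a))
           (comp (phi2 F (unit M) a) (tensm N (phi0 F) (idm (fob F a))))
      = lu N (fob F a).
Proof. destruct (smf_prop F) as (_ & _ & _ & _ & _ & _ & H & _); apply H. Qed.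
Lemma smf_ru (M N : SMC) (F : SMFunctor M N) a :
      comp (fmor F (ru M a))
           (comp (phi2 F a (unit M)) (tensm N (idm (fob F a)) (phi0 F)))
      = ru N (fob F a).
Proof. destruct (smf_prop F) as (_ & _ & _ & _ & _ & _ & _ & H & _); apply H. Qed.
Lemma smf_br (M N : SMC) (F : SMFunctor M N) a b :
      comp (fmor F (br M a b)) (phi2 F a b)
      = comp (phi2 F b a) (br N (fob F a) (fob F b)).
Proof. destruct (smf_prop F) as (_ & _ & _ & _ & _ & _ & _ & _ & H); apply H. Qed.

Definition phi2i (M N : SMC) (F : SMFunctor M N) a b : hom (fob F (tens M a b)) (tens N (fob F a) (fob F b)) :=
  inv (phi2 F a b) (smf_phi2_iso M N F a b).
Arguments phi2i {M N} F a b.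

Lemma phi2i_l (M N : SMC) (F : SMFunctor M N) a b : comp (phi2i F a b) (phi2 F a b) = idm _.
Proof. apply inv_l. Qed.
Lemma phi2i_r (M N : SMC) (F : SMFunctor M N) a b : comp (phi2 F a b) (phi2i F a b) = idm _.
Proof. apply inv_r. Qed.

Definition T (M N : SMC) (F : SMFunctor M N) a b a' b'
  (x : hom (fob F a) (fob F b)) (y : hom (fob F a') (fob F b')) :
  hom (fob F (tens M a a')) (fob F (tens M b b')) :=
  comp (phi2 F b b') (comp (tensm N x y) (phi2i F a a')).
Arguments T {M N} F {a b a' b'} x y.

Lemma T_nat (M N : SMC) (F : SMFunctor M N) a b a' b'
  (x : hom (fob F a) (fob F b)) (y : hom (fob F a') (fob F b')) :
  comp (T F x y) (phi2 F a a') = comp (phi2 F b b') (tensm N x y).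
Proof. unfold T. rewrite <- !comp_assoc, phi2i_l, comp_idr. reflexivity. Qed.

Lemma T_id (M N : SMC) (F : SMFunctor M N) a a' :
  T F (idm (fob F a)) (idm (fob F a')) = idm _.
Proof. unfold T. rewrite tens_id, comp_idl, phi2i_r. reflexivity. Qed.

Lemma T_comp (M N : SMC) (F : SMFunctor M N) a b c a' b' c'
  (x : hom (fob F b) (fob F c)) (x' : hom (fob F a) (fob F b))
  (y : hom (fob F b') (fob F c')) (y' : hom (fob F a') (fob F b')) :
  T F (comp x x') (comp y y') = comp (T F x y) (T F x' y').
Proof.
  unfold T. rewrite tens_comp. rewrite <- !comp_assoc. f_equal. f_equal.
  rewrite (comp_assoc _ _ _ _ _ (phi2i F b b') (phi2 F b b')), phi2i_l, comp_idl. reflexivity.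
Qed.

Lemma T_emb (M N : SMC) (F : SMFunctor M N) a b a' b' (f : hom a b) (g : hom a' b') :
  T F (fmor F f) (fmor F g) = fmor F (tensm M f g).
Proof.
  apply (iso_cancel_r _ _ _ _ (phi2 F a a')). apply smf_phi2_iso.
  rewrite T_nat. apply smf_nat.
Qed.
Lemma crw3 (C : Cat) (a b c d : ob C) (p : hom c d) (q : hom b c) (r : hom a b) (e : hom a d) :
  comp p (comp q r) = e -> forall x (s : hom x a), comp p (comp q (comp r s)) = comp e s.
Proof. intros E x s. rewrite (comp_assoc _ _ _ _ _ q r s), comp_assoc, E. reflexivity. Qed.

Ltac ra := repeat rewrite <- comp_assoc.
Tactic Notation "rw" open_constr(E) := ra; first [rewrite E | rewrite (crw _ _ _ _ _ _ _ E) | rewrite (crw3 _ _ _ _ _ _ _ _ _ E)]; ra.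

Lemma tsplit_l (N : SMC) a b c a' b' (f : hom b c) (g : hom a b) (h : hom a' b') :
  tensm N (comp f g) h = comp (tensm N f (idm b')) (tensm N g h).
Proof. rewrite <- tens_comp, comp_idl. reflexivity. Qed.
Lemma tsplit_r (N : SMC) a b c a' b' (f : hom b c) (g : hom a b) (h : hom a' b') :
  tensm N h (comp f g) = comp (tensm N (idm b') f) (tensm N h g).
Proof. rewrite <- tens_comp, comp_idl. reflexivity. Qed.
Lemma tswap1 (N : SMC) a b a' b' (f : hom a b) (g : hom a' b') :
  tensm N f g = comp (tensm N f (idm b')) (tensm N (idm a) g).
Proof. rewrite <- tens_comp, comp_idl, comp_idr. reflexivity. Qed.
Lemma tswap2 (N : SMC) a b a' b' (f : hom a b) (g : hom a' b') :
  tensm N f g = comp (tensm N (idm b) g) (tensm N f (idm a')).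
Proof. rewrite <- tens_comp, comp_idl, comp_idr. reflexivity. Qed.
Lemma tmerge (N : SMC) a b e c d g (f : hom b e) (f' : hom a b) (h : hom d g) (h' : hom c d) :
  comp (tensm N f h) (tensm N f' h') = tensm N (comp f f') (comp h h').
Proof. symmetry; apply tens_comp. Qed.

Lemma T_br (M N : SMC) (F : SMFunctor M N) a a' b b'
  (x : hom (fob F a) (fob F a')) (y : hom (fob F b) (fob F b')) :
  comp (fmor F (br M a' b')) (T F x y) = comp (T F y x) (fmor F (br M a b)).
Proof.
  apply (iso_cancel_r _ _ _ _ (phi2 F a b)); [apply smf_phi2_iso|].
  ra. rw (T_nat _ _ F _ _ _ _ x y). rw (smf_br _ _ F a' b'). rw (br_nat N).
  rw (smf_br _ _ F a b). rw (T_nat _ _ F _ _ _ _ y x). reflexivity.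
Qed.

Lemma T_asc (M N : SMC) (F : SMFunctor M N) a a' b b' c c'
  (x : hom (fob F a) (fob F a')) (y : hom (fob F b) (fob F b')) (z : hom (fob F c) (fob F c')) :
  comp (fmor F (asc M a' b' c')) (T F (T F x y) z) = comp (T F x (T F y z)) (fmor F (asc M a b c)).
Proof.
  apply (iso_cancel_r _ _ _ _ (comp (phi2 F (tens M a b) c) (tensm N (phi2 F a b) (idm (fob F c))))).
  { apply iso_comp. apply smf_phi2_iso. apply tens_iso. apply smf_phi2_iso. apply iso_id. }
  ra. rw (T_nat _ _ F _ _ _ _ (T F x y) z). rw (tmerge N).
  rewrite T_nat, comp_idr. rw (tsplit_l N _ _ _ _ _ (phi2 F a' b')).
  rw (smf_asc _ _ F a' b' c'). rw (asc_nat N).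
  rw (smf_asc _ _ F a b c). rw (T_nat _ _ F _ _ _ _ x (T F y z)). rw (tmerge N _ _ _ _ _ _ x _ (T F y z) _).
  rewrite T_nat, comp_idr. rw (tsplit_r N _ _ _ _ _ (phi2 F b' c')). reflexivity.
Qed.

Lemma T_lu (M N : SMC) (F : SMFunctor M N) a a' (x : hom (fob F a) (fob F a')) :
  comp (fmor F (lu M a')) (T F (fmor F (idm (unit M))) x) = comp x (fmor F (lu M a)).
Proof.
  rewrite smf_id.
  apply (iso_cancel_r _ _ _ _ (comp (phi2 F (unit M) a) (tensm N (phi0 F) (idm (fob F a))))).
  { apply iso_comp. apply smf_phi2_iso. apply tens_iso. apply smf_phi0_iso. apply iso_id. }
  ra. rw (T_nat _ _ F _ _ _ _ (idm _) x). rw (tmerge N). rewrite comp_idl, comp_idr.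
  rewrite (tswap1 N _ _ _ _ (phi0 F) x). rw (smf_lu _ _ F a'). rw (lu_nat N).
  rw (smf_lu _ _ F a). reflexivity.
Qed.

Lemma T_ru (M N : SMC) (F : SMFunctor M N) a a' (x : hom (fob F a) (fob F a')) :
  comp (fmor F (ru M a')) (T F x (fmor F (idm (unit M)))) = comp x (fmor F (ru M a)).
Proof.
  rewrite smf_id.
  apply (iso_cancel_r _ _ _ _ (comp (phi2 F a (unit M)) (tensm N (idm (fob F a)) (phi0 F)))).
  { apply iso_comp. apply smf_phi2_iso. apply tens_iso. apply iso_id. apply smf_phi0_iso. }
  ra. rw (T_nat _ _ F _ _ _ _ x (idm _)). rw (tmerge N). rewrite comp_idl, comp_idr.
  rewrite (tswap2 N _ _ _ _ x (phi0 F)). rw (smf_ru _ _ F a'). rw (ru_nat N).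
  rw (smf_ru _ _ F a). reflexivity.
Qed.
Definition quot (X : Type) (E : X -> X -> Prop) := { P : X -> Prop | exists x, P = E x }.
Definition cls {X : Type} {E : X -> X -> Prop} (x : X) : quot X E :=
  exist _ (E x) (ex_intro _ x eq_refl).
Definition rep {X : Type} {E : X -> X -> Prop} (q : quot X E) : X :=
  proj1_sig (constructive_indefinite_description _ (proj2_sig q)).

Lemma cls_rep (X : Type) (E : X -> X -> Prop) (q : quot X E) : cls (rep q) = q.
Proof.
  destruct q as [P HP]. unfold rep, cls. simpl.
  destruct (constructive_indefinite_description _ HP) as [r Hr]. simpl. subst P.
  apply ProofIrrelevanceTheory.subset_eq_compat. reflexivity.
Qed.

Lemma cls_eq (X : Type) (E : X -> X -> Prop)
  (Hs : forall x y, E x y -> E y x) (Ht : forall x y z, E x y -> E y z -> E x z)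
  (x y : X) : E x y -> @cls X E x = cls y.
Proof.
  intro H. unfold cls. apply ProofIrrelevanceTheory.subset_eq_compat.
  extensionality z. apply propositional_extensionality. split; intro H'.
  - apply Ht with x; auto.
  - apply Ht with y; auto.
Qed.

Lemma rep_cls (X : Type) (E : X -> X -> Prop) (Hr : forall x, E x x) (x : X) :
  E (rep (@cls X E x)) x.
Proof.
  unfold rep. destruct (constructive_indefinite_description _ _) as [r Hr']. simpl.
  simpl in Hr'. rewrite <- Hr'. apply Hr.
Qed.

Definition SWI (M : SMC) (a : ob M) : Prop :=
  forall (N : SMC) (pN : pure N) (F : SMFunctor M N), weakly_invertible (fob F a).

Inductive Tm (M : SMC) : ob M -> ob M -> Type :=
| t_emb : forall a b, hom a b -> Tm M a b
| t_comp : forall a b c, Tm M b c -> Tm M a b -> Tm M a c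
| t_tens : forall a b c d, Tm M a b -> Tm M c d -> Tm M (tens M a c) (tens M b d)
| t_can : forall a b, SWI M a -> SWI M b -> Tm M a b.
Arguments t_emb {M a b} _.
Arguments t_comp {M a b c} _ _.
Arguments t_tens {M a b c d} _ _.
Arguments t_can {M} a b _ _.

Fixpoint interp (M N : SMC) (pN : pure N) (F : SMFunctor M N) (a b : ob M) (t : Tm M a b)
  {struct t} : hom (fob F a) (fob F b) :=
  match t in Tm _ x y return hom (fob F x) (fob F y) with
  | t_emb f => fmor F f
  | t_comp g f => comp (interp M N pN F _ _ g) (interp M N pN F _ _ f)
  | t_tens f g => T F (interp M N pN F _ _ f) (interp M N pN F _ _ g)
  | t_can a b wa wb => canN N pN (fob F a) (fob F b) (wa N pN F) (wb N pN F)
  end.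

Definition sem_eq (M : SMC) (a b : ob M) (t s : Tm M a b) : Prop :=
  forall (N : SMC) (pN : pure N) (F : SMFunctor M N), interp M N pN F a b t = interp M N pN F a b s.

Definition Rhom (M : SMC) (a b : ob M) : Type := quot (Tm M a b) (sem_eq M a b).

Definition qi (M N : SMC) (pN : pure N) (F : SMFunctor M N) (a b : ob M) (q : Rhom M a b)
  : hom (fob F a) (fob F b) := interp M N pN F a b (rep q).

Lemma qi_cls (M N : SMC) (pN : pure N) (F : SMFunctor M N) a b (t : Tm M a b) :
  qi M N pN F a b (cls t) = interp M N pN F a b t.
Proof. unfold qi. apply (rep_cls _ (sem_eq M a b)). intros x ? ? ?; reflexivity. Qed.

Lemma cls_sem (M : SMC) a b (t s : Tm M a b) : sem_eq M a b t s -> @cls _ (sem_eq M a b) t = cls s.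
Proof.
  apply cls_eq.
  - intros x y H N pN F. symmetry. apply H.
  - intros x y z H1 H2 N pN F. rewrite H1. apply H2.
Qed.

Lemma qext (M : SMC) a b (q1 q2 : Rhom M a b) :
  (forall N pN F, qi M N pN F a b q1 = qi M N pN F a b q2) -> q1 = q2.
Proof.
  intro H. rewrite <- (cls_rep _ _ q1), <- (cls_rep _ _ q2). apply cls_sem. exact H.
Qed.

Definition Remb (M : SMC) a b (f : hom a b) : Rhom M a b := cls (t_emb f).
Definition Rid (M : SMC) a : Rhom M a a := Remb M a a (idm a).
Definition Rcomp (M : SMC) a b c (g : Rhom M b c) (f : Rhom M a b) : Rhom M a c :=
  cls (t_comp (rep g) (rep f)).
Definition Rtens (M : SMC) a b c d (f : Rhom M a b) (g : Rhom M c d) :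
  Rhom M (tens M a c) (tens M b d) := cls (t_tens (rep f) (rep g)).
Arguments Remb {M a b} f.
Arguments Rid {M} a.
Arguments Rcomp {M a b c} g f.
Arguments Rtens {M a b c d} f g.

Lemma qi_emb (M N : SMC) pN F a b (f : hom a b) : qi M N pN F a b (Remb f) = fmor F f.
Proof. unfold Remb. rewrite qi_cls. reflexivity. Qed.
Lemma qi_comp (M N : SMC) pN F a b c (g : Rhom M b c) (f : Rhom M a b) :
  qi M N pN F a c (Rcomp g f) = comp (qi M N pN F b c g) (qi M N pN F a b f).
Proof. unfold Rcomp. rewrite qi_cls. reflexivity. Qed.
Lemma qi_tens (M N : SMC) pN F a b c d (f : Rhom M a b) (g : Rhom M c d) :
  qi M N pN F _ _ (Rtens f g) = T F (qi M N pN F a b f) (qi M N pN F c d g).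
Proof. unfold Rtens. rewrite qi_cls. reflexivity. Qed.
Lemma qi_id (M N : SMC) pN F a : qi M N pN F a a (Rid a) = idm _.
Proof. unfold Rid. rewrite qi_emb. apply smf_id. Qed.

Ltac qsimp := apply qext; intros ? ? ?; repeat (rewrite qi_comp || rewrite qi_tens || rewrite qi_id || rewrite qi_emb || rewrite qi_cls).

Definition RCat (M : SMC) : Cat.
Proof.
  refine {| ob := ob M; hom := Rhom M; idm := @Rid M; comp := @Rcomp M |}.
  - intros; qsimp. apply comp_idl.
  - intros; qsimp. apply comp_idr.
  - intros; qsimp. apply comp_assoc.
Defined.

Lemma mk_iso_R (M : SMC) (a b : ob M) (f : Rhom M a b) (g : Rhom M b a) :
  Rcomp g f = Rid a -> Rcomp f g = Rid b -> @is_iso (RCat M) a b f.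
Proof. intros H1 H2. exists g. split; assumption. Qed.

Lemma Remb_iso (M : SMC) (a b : ob M) (f : hom a b) : is_iso f -> @is_iso (RCat M) a b (Remb f).
Proof.
  intros [g [H1 H2]]. apply mk_iso_R with (Remb g); qsimp;
  rewrite <- smf_comp; [rewrite H1 | rewrite H2]; apply smf_id.
Qed.

Ltac esimp := qsimp; repeat match goal with |- context [idm (fob (smf_data ?F) ?x)] => rewrite <- (smf_id _ _ F x) end;
  rewrite ?T_emb, <- ?smf_comp; f_equal.

Definition RSMC (M : SMC) : SMC.
Proof.
  refine {| scat := RCat M; tens := tens M; tensm := fun a b c d f g => @Rtens M a b c d f g;
    unit := unit M;
    asc := fun a b c => Remb (asc M a b c); asc_iso := fun a b c => Remb_iso M _ _ _ (asc_iso M a b c);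
    lu := fun a => Remb (lu M a); lu_iso := fun a => Remb_iso M _ _ _ (lu_iso M a);
    ru := fun a => Remb (ru M a); ru_iso := fun a => Remb_iso M _ _ _ (ru_iso M a);
    br := fun a b => Remb (br M a b) |}.
  - intros; cbn. qsimp. apply T_id.
  - intros; cbn. qsimp. apply T_comp.
  - intros; cbn. qsimp. apply T_asc.
  - intros; cbn. qsimp. rewrite <- smf_id. apply T_lu.
  - intros; cbn. qsimp. rewrite <- smf_id. apply T_ru.
  - intros; cbn. esimp. apply pentagon.
  - intros; cbn. esimp. apply triangle.
  - intros; cbn. qsimp. apply T_br.
  - intros; cbn. esimp. apply br_sym.
  - intros; cbn. esimp. apply hexagon.
Defined.
Definition eta_data (M : SMC) : SMFData M (RSMC M) :=
  {| fob := fun a : ob M => (a : ob (RSMC M));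
     fmor := fun (a b : ob M) (f : hom a b) => (Remb f : @hom (RSMC M) a b);
     phi0 := Rid (unit M) : @hom (RSMC M) (unit M) (unit M);
     phi2 := fun a b : ob M => Rid (tens M a b) : @hom (RSMC M) (tens M a b) (tens M a b) |}.

Lemma eta_SMF (M : SMC) : is_SMF (eta_data M).
Proof.
  repeat split; intros; unfold eta_data; cbn;
  first [ reflexivity | apply iso_id
        | solve [qsimp; apply smf_comp]
        | solve [qsimp; rewrite comp_idl, comp_idr; apply T_emb]
        | solve [esimp; rewrite ?tens_id, ?comp_idl, ?comp_idr; reflexivity] ].
Qed.
Lemma qi_iso (M N : SMC) pN F (a b : ob M) (q : Rhom M a b) :
  @is_iso (RCat M) a b q -> is_iso (qi M N pN F a b q).
Proof.
  intros [g [H1 H2]]. change (Rcomp g q = Rid a) in H1. change (Rcomp q g = Rid b) in H2.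
  exists (qi M N pN F b a g). split.
  - rewrite <- qi_comp, H1. apply qi_id.
  - rewrite <- qi_comp, H2. apply qi_id.
Qed.

Lemma wi_R_SWI (M : SMC) (a : ob M) : @weakly_invertible (RSMC M) a -> SWI M a.
Proof.
  intros [b [[i Hi] [j Hj]]] N pN F. exists (fob F b). split.
  - exists (comp (inv (phi0 F) (smf_phi0_iso _ _ F)) (comp (qi M N pN F (tens M a b) (unit M) i) (phi2 F a b))).
    apply iso_comp. apply inv_iso. apply iso_comp. apply qi_iso; exact Hi. apply smf_phi2_iso.
  - exists (comp (inv (phi0 F) (smf_phi0_iso _ _ F)) (comp (qi M N pN F (tens M b a) (unit M) j) (phi2 F b a))).
    apply iso_comp. apply inv_iso. apply iso_comp. apply qi_iso; exact Hj. apply smf_phi2_iso.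
Qed.

Definition Rcan (M : SMC) (a b : ob M) (sa : SWI M a) (sb : SWI M b) : Rhom M a b :=
  cls (t_can a b sa sb).

Lemma Rcan_iso (M : SMC) (a b : ob M) (sa : SWI M a) (sb : SWI M b) :
  @is_iso (RCat M) a b (Rcan M a b sa sb).
Proof.
  apply mk_iso_R with (Rcan M b a sb sa); unfold Rcan; apply qext; intros N pN F;
  rewrite qi_comp, !qi_cls, qi_id; cbn.
  - transitivity (canN N pN _ _ (sa N pN F) (sa N pN F)).
    + apply canN_uniq. apply iso_comp; apply canN_iso.
    + symmetry. apply canN_uniq. apply iso_id.
  - transitivity (canN N pN _ _ (sb N pN F) (sb N pN F)).
    + apply canN_uniq. apply iso_comp; apply canN_iso.
    + symmetry. apply canN_uniq. apply iso_id.
Qed.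

Lemma R_pure (M : SMC) : pure (RSMC M).
Proof.
  intros a b wa wb.
  exists (Rcan M a b (wi_R_SWI M a wa) (wi_R_SWI M b wb)). split.
  - apply Rcan_iso.
  - intros g Hg. apply qext. intros N pN F. unfold Rcan. rewrite qi_cls. cbn.
    apply canN_uniq. apply qi_iso. exact Hg.
Qed.
Definition Gdata (M N : SMC) (pN : pure N) (F : SMFunctor M N) : SMFData (RSMC M) N :=
  {| fob := fun a : ob (RSMC M) => fob F a;
     fmor := fun (a b : ob (RSMC M)) (q : @hom (RSMC M) a b) => qi M N pN F a b q;
     phi0 := phi0 F;
     phi2 := fun a b : ob (RSMC M) => phi2 F a b |}.

Lemma G_SMF (M N : SMC) (pN : pure N) (F : SMFunctor M N) : is_SMF (Gdata M N pN F).
Proof.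
  repeat split; intros; unfold Gdata; cbn.
  - apply qi_id.
  - apply qi_comp.
  - apply smf_phi0_iso.
  - apply smf_phi2_iso.
  - rewrite qi_tens, T_nat. reflexivity.
  - rewrite qi_emb. apply smf_asc.
  - rewrite qi_emb. apply smf_lu.
  - rewrite qi_emb. apply smf_ru.
  - rewrite qi_emb. apply smf_br.
Qed.

Lemma G_comp_eta (M N : SMC) (pN : pure N) (F : SMFunctor M N) :
  smf_comp_data (Gdata M N pN F) (eta_data M) = smf_data F.
Proof.
  unfold smf_comp_data, Gdata, eta_data; cbn.
  assert (E1 : (fun (a b : ob M) (f : hom a b) => qi M N pN F a b (Remb f)) = @fmor _ _ F).
  { extensionality a; extensionality b; extensionality f. apply qi_emb. }
  assert (E2 : (fun a b : ob M => comp (qi M N pN F _ _ (Rid (tens M a b))) (phi2 F a b)) = @phi2 _ _ F).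
  { extensionality a; extensionality b. rewrite qi_id. apply comp_idl. }
  rewrite qi_id, comp_idl.
  rewrite E1, E2. destruct F as [[Fo Fm F0 F2] HF]. reflexivity.
Qed.
Lemma cls_comp (M : SMC) a b c (g : Tm M b c) (f : Tm M a b) :
  @cls _ (sem_eq M a c) (t_comp g f) = Rcomp (cls g) (cls f).
Proof. apply qext; intros N pN F. rewrite qi_comp, !qi_cls. reflexivity. Qed.

Lemma cls_tens (M : SMC) a b c d (f : Tm M a b) (g : Tm M c d) :
  @cls _ (sem_eq M _ _) (t_tens f g) = Rtens (cls f) (cls g).
Proof. apply qext; intros N pN F. rewrite qi_tens, !qi_cls. reflexivity. Qed.

Lemma G_uniq (M N : SMC) (pN : pure N) (F : SMFunctor M N) (G' : SMFunctor (RSMC M) N) :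
  smf_comp_data G' (eta_data M) = smf_data F -> smf_data G' = Gdata M N pN F.
Proof.
  intro H.
  destruct G' as [[Go Gm G0 G2] HG]. destruct F as [[Fo Fm F0 F2] HF].
  cbn in H. unfold eta_data in H. cbn in H.
  assert (Ho : (fun a => Go a) = Fo) by exact (f_equal (@fob _ _) H).
  subst Fo.
  injection H as H1 H2 H3.
  apply inj_pair2 in H1. apply inj_pair2 in H2. apply inj_pair2 in H3.
  subst Fm F0 F2.
  set (F' := {| smf_prop := HF |} : SMFunctor M N).
  assert (HGid : forall a : ob M, Gm a a (Rid a) = idm (Go a)) by apply HG.
  assert (HGc : forall (a b c : ob M) (g : Rhom M b c) (f : Rhom M a b),
             Gm a c (Rcomp g f) = comp (Gm b c g) (Gm a b f)) by apply HG.
  assert (HGn : forall (a a' b b' : ob M) (f : Rhom M a a') (g : Rhom M b b'),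
      comp (G2 a' b') (tensm N (Gm a a' f) (Gm b b' g)) = comp (Gm _ _ (Rtens f g)) (G2 a b)) by apply HG.
  assert (HGi : forall (a b : ob M) (q : Rhom M a b), @is_iso (RCat M) a b q -> is_iso (Gm a b q)).
  { intros a b q [g [Hg1 Hg2]]. exists (Gm b a g). split.
    - rewrite <- HGc, <- HGid. f_equal. exact Hg1.
    - rewrite <- HGc, <- HGid. f_equal. exact Hg2. }
  assert (Hm : forall a b (t : Tm M a b), Gm a b (cls t) = interp M N pN F' a b t).
  { induction t as [a b f | a b c g IHg f IHf | a b c d f IHf g IHg | a b sa sb]; cbn.
    - reflexivity.
    - rewrite cls_comp, HGc, IHg, IHf. reflexivity.
    - apply (iso_cancel_r _ _ _ _ (phi2 F' a c)). apply smf_phi2_iso.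
      rewrite T_nat, <- IHf, <- IHg. cbn. rewrite !HGid, !comp_idl.
      rewrite cls_tens. symmetry. apply HGn.
    - apply canN_uniq. apply HGi. apply Rcan_iso. }
  assert (Em : (fun (a b : ob M) (q : Rhom M a b) => qi M N pN F' a b q) = Gm).
  { extensionality a; extensionality b; extensionality q.
    rewrite <- (cls_rep _ _ q). rewrite qi_cls. symmetry. apply Hm. }
  unfold Gdata. cbn. fold F'. rewrite Em.
  assert (E2 : (fun a b : ob M => comp (Gm (tens M a b) (tens M a b) (Rid (tens M a b))) (G2 a b)) = G2).
  { extensionality a; extensionality b. rewrite HGid. apply comp_idl. }
  rewrite HGid, comp_idl, E2. reflexivity.
Qed.

Theorem proposition3p5 :
  forall M : SMC,
  exists (R : SMC) (eta : SMFunctor M R),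
    pure R /\
    forall (N : SMC), pure N -> forall F : SMFunctor M N,
      exists G : SMFunctor R N,
        smf_comp_data G eta = smf_data F /\
        forall G' : SMFunctor R N,
          smf_comp_data G' eta = smf_data F -> smf_data G' = smf_data G.
Proof.
  intro M. exists (RSMC M), {| smf_data := eta_data M; smf_prop := eta_SMF M |}. split.
  - apply R_pure.
  - intros N pN F. exists {| smf_data := Gdata M N pN F; smf_prop := G_SMF M N pN F |}. split.
    + apply G_comp_eta.
    + intros G' H. apply G_uniq. exact H.
Qed.
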